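(* Let $r\ge3$ and $d\in\{1,\dots,r-1\}$. Then there is a brick $M\in\mathrm{rep}_{\mathrm{proj}}(K_r,d)$ which is not $(d+1)$-homogeneous.
   Context: $k$ algebraically closed of arbitrary characteristic. For $n\ge1$, $K_n$ is the Kronecker quiver with arrows $\gamma_1,\dots,\gamma_n:1\to2$, $A_n=\bigoplus_ik\gamma_i$. For $M=(M_1,M_2,(M(\gamma_i))_i)\in\mathrm{rep}(K_r)$ let $\psi_M:A_r\otimes M_1\to M_2$, $\gamma_i\otimes m\mapsto M(\gamma_i)(m)$; $M\in\mathrm{rep}_{\mathrm{proj}}(K_r,d)$ means $\psi_M|_{\mathfrak v\otimes M_1}$ is injective for every $d$-dimensional subspace $\mathfrak v\subseteq A_r$. For an injective linear map $\alpha:A_e\to A_r$, $\alpha^*(M)\in\mathrm{rep}(K_e)$ is $(M_1,M_2,(\psi_M(\alpha(\gamma_j)\otimes-))_{j\le e})$. $M$ is $e$-homogeneous ($1\le e\le r$) if $\alpha^*(M)\cong\beta^*(M)$ for all injective linear maps $\alpha,\beta:A_e\to A_r$. A brick is a representation with endomorphism ring $k$. *)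

(* Defs.v *)
From HB Require Import structures.
From mathcomp Require Import all_boot all_order all_algebra.
Set Implicit Arguments. Unset Strict Implicit. Unset Printing Implicit Defensive.
Import GRing.Theory.
Local Open Scope ring_scope.

(* A finite-dimensional representation M of the Kronecker quiver K_r over k
   is encoded by M_1 = k^a, M_2 = k^b (row vectors) and, for each arrow
   gamma_i (i < r), the matrix M i : 'M_(a,b); the linear map M(gamma_i)
   sends the row vector m to  m *m M i. *)
Definition krep (k : fieldType) (r a b : nat) := 'I_r -> 'M[k]_(a, b).

(* An injective linear map alpha : A_e -> A_r, gamma_j |-> sum_i alpha j i gamma_i,
   is a matrix 'M_(e, r) of full row rank (row_free).
   pullback alpha M = alpha^*(M), with arrows  psi_M(alpha(gamma_j) (x) -). *)
Definition pullback (k : fieldType) (r e a b : nat) (alpha : 'M[k]_(e, r))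
  (M : krep k r a b) : krep k e a b :=
  fun j => \sum_(i < r) alpha j i *: M i.

(* psi_N : A_e (x) N_1 -> N_2 injective; A_e (x) N_1 is identified with
   N_1^e via the basis gamma_1..gamma_e. *)
Definition psi_injective (k : fieldType) (e a b : nat) (N : krep k e a b) : Prop :=
  forall m : 'I_e -> 'rV[k]_a,
    \sum_(j < e) m j *m N j = 0 -> forall j, m j = 0.

(* M in rep_proj(K_r, d): for every d-dimensional subspace v of A_r
   (given by a basis, i.e. the rows of a full-row-rank matrix alpha),
   psi_M restricted to v (x) M_1 is injective. *)
Definition rep_proj (k : fieldType) (r d a b : nat) (M : krep k r a b) : Prop :=
  forall alpha : 'M[k]_(d, r), row_free alpha -> psi_injective (pullback alpha M).

Definition krep_iso (k : fieldType) (e a b : nat) (N N' : krep k e a b) : Prop :=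
  exists (P : 'M[k]_a) (Q : 'M[k]_b),
    P \in unitmx /\ Q \in unitmx /\ forall j, N j *m Q = P *m N' j.

Definition homogeneous (k : fieldType) (r e a b : nat) (M : krep k r a b) : Prop :=
  forall alpha beta : 'M[k]_(e, r), row_free alpha -> row_free beta ->
    krep_iso (pullback alpha M) (pullback beta M).

Definition brick (k : fieldType) (r a b : nat) (M : krep k r a b) : Prop :=
  (0 < a + b)%N /\
  forall (P : 'M[k]_a) (Q : 'M[k]_b), (forall i, M i *m Q = P *m M i) ->
    exists c : k, P = c%:M /\ Q = c%:M.

(* Main.v *)
Require Import Defs.
From mathcomp Require Import all_boot all_order all_algebra.
From mathcomp Require Import fingroup perm zify.
Set Implicit Arguments. Unset Strict Implicit. Unset Printing Implicit Defensive.
Import GRing.Theory.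
Local Open Scope ring_scope.

Section Gen.
Variable k : fieldType.

Lemma sum_delta n (c : 'I_n) (f : 'I_n -> k) :
  \sum_(j < n) ((j:nat) == c)%:R * f j = f c.
Proof.
rewrite (bigD1 c) //= eqxx mul1r big1 ?addr0 // => j hj.
by rewrite (_ : ((j:nat) == c) = false) ?mul0r //; apply/negbTE.
Qed.

Lemma sum_delta0 n (c : nat) (f : 'I_n -> k) : (n <= c)%N ->
  \sum_(j < n) ((j:nat) == c)%:R * f j = 0.
Proof.
move=> hc; rewrite big1 // => j _; case: eqP => [hj|]; last by rewrite mul0r.
by move: (ltn_ord j); rewrite hj ltnNge hc.
Qed.

Definition psiN e a b (N : krep k e a b) (W : 'M[k]_(e,a)) : 'rV_b :=
  \sum_(j < e) row j W *m N j.

Lemma psiN_pullback r e a b (alpha : 'M[k]_(e, r)) (M : krep k r a b) W :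
  psiN (pullback alpha M) W = psiN M (alpha^T *m W).
Proof.
rewrite /psiN /pullback.
under eq_bigr do rewrite mulmx_sumr.
rewrite exchange_big /=; apply: eq_bigr => i _.
rewrite row_mul (mulmx_sum_row (row i alpha^T) W) mulmx_suml.
apply: eq_bigr => j _.
by rewrite -scalemxAl scalemxAr !mxE.
Qed.

Lemma psiN_iso e a b (N N' : krep k e a b) P Q W :
  (forall j, N j *m Q = P *m N' j) -> psiN N W *m Q = psiN N' (W *m P).
Proof.
move=> h; rewrite /psiN mulmx_suml; apply: eq_bigr => j _.
by rewrite -mulmxA h row_mul mulmxA.
Qed.

Lemma psi_injectiveE e a b (N : krep k e a b) :
  (forall W, psiN N W = 0 -> W = 0) -> psi_injective N.
Proof.
move=> h m hm j; have := h (\matrix_(j < e) m j).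
rewrite /psiN; under eq_bigr do rewrite rowK.
by move=> /(_ hm) /(congr1 (row j)); rewrite rowK row0.
Qed.

End Gen.
Section Constr.
Variable k : fieldType.
Variables r d : nat.
Local Notation a := d.+2.

Definition W1 : 'M[k]_(r, a) := \matrix_(i < r, l < a) ((((l:nat) == i) && (i <= d)%N)%:R).
Definition W2 : 'M[k]_(r, a) := \matrix_(i < r, l < a) (((l:nat) == i.+1)%:R).
Definition Smx : 'M[k]_(1 + 1, r * a) := col_mx (mxvec W1) (mxvec W2).
Definition Bmx := col_base (cokermx Smx).
Definition bdim := \rank (cokermx Smx).
Definition Mrep : krep k r a bdim :=
  fun i => \matrix_(j < a) (mxvec (delta_mx i j) *m Bmx).

Lemma psiM W : psiN Mrep W = mxvec W *m Bmx.
Proof.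
rewrite {2}(matrix_sum_delta W) /psiN linear_sum mulmx_suml; apply: eq_bigr => i _.
rewrite linear_sum mulmx_suml mulmx_sum_row; apply: eq_bigr => j _.
by rewrite rowK linearZ -scalemxAl mxE.
Qed.

Lemma kerB (x : 'rV[k]_(r * a)) : x *m Bmx = 0 <-> (x <= Smx)%MS.
Proof.
rewrite submxE; have hb := mulmx_base (cokermx Smx).
split => [h | /eqP h].
  by apply/eqP; rewrite -hb mulmxA /Bmx h mul0mx.
apply/eqP; rewrite -(mulmx_free_eq0 _ (row_base_free (cokermx Smx))).
by rewrite -mulmxA /Bmx hb h.
Qed.

Lemma Binj p (X : 'M[k]_(bdim, p)) : Bmx *m X = 0 -> X = 0.
Proof.
move=> h; apply: (row_full_inj (col_base_full (cokermx Smx))).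
by rewrite mulmx0.
Qed.

Lemma kerM W : psiN Mrep W = 0 <-> exists s t, W = s *: W1 + t *: W2.
Proof.
rewrite psiM; split.
  move/kerB; case/submxP => D hD.
  move: hD; rewrite -[D]hsubmxK mul_row_col /Smx.
  rewrite (mx11_scalar (lsubmx D)) (mx11_scalar (rsubmx D)) !mul_scalar_mx => hD.
  exists (lsubmx D 0 0), (rsubmx D 0 0).
  by apply: (can_inj (@mxvecK _ _ _)); rewrite hD linearD !linearZ.
case=> s [t ->]; apply/kerB; apply/submxP; exists (\row_(j < 1 + 1) (if j == 0 then s else t)).
rewrite linearD !linearZ /= -[X in X *m _]hsubmxK mul_row_col /Smx.
rewrite (mx11_scalar (lsubmx _)) (mx11_scalar (rsubmx _)) !mul_scalar_mx.
by rewrite !mxE /=.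
Qed.

End Constr.
Section Rank.
Variable k : fieldType.
Variables r d : nat.
Hypothesis hr : (d.+1 <= r)%N.
Local Notation a := d.+2.

Lemma rank_bound (s t : k) e (A : 'M[k]_(r, e)) (X : 'M[k]_(e, a)) :
  (s != 0) || (t != 0) -> A *m X = s *: W1 k r d + t *: W2 k r d -> (d < e)%N.
Proof.
move=> hst hAX.
have key : forall g : 'I_d.+1 -> 'I_a,
    mxsub (widen_ord hr) g (A *m X) \in unitmx -> (d < e)%N.
  move=> g hu; have := mxrank_unit hu; rewrite mxsub_mul => h.
  have := mxrankM_maxl (rowsub (widen_ord hr) A) (colsub g X).
  rewrite h => /leq_trans; apply; exact: rank_leq_col.
case/orP: hst => [hs | ht].
  apply: (key (widen_ord (leqnSn _))); rewrite hAX.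
  rewrite unitmxE -det_tr det_trig; last first.
    apply/is_trig_mxP => i j hij; rewrite !mxE /=.
    rewrite (_ : ((i:nat) == j) = false); last by rewrite ltn_eqF.
    rewrite (_ : ((i:nat) == j.+1) = false) ?andFb ?mulr0 ?addr0 //.
    by apply/negbTE; rewrite neq_ltn ltnS ltnW.
  rewrite unitfE prodf_seq_neq0; apply/allP => i _ /=.
  rewrite !mxE /= eqxx -ltnS ltn_ord /= mulr1.
  by rewrite (_ : ((i:nat) == i.+1) = false) ?mulr0 ?addr0 // ltn_eqF.
apply: (key (fun j : 'I_d.+1 => lift (ord0 : 'I_a) j)); rewrite hAX.
rewrite unitmxE det_trig; last first.
  apply/is_trig_mxP => i j hij; rewrite !mxE /=.
  rewrite /bump /= add1n eqSS (gtn_eqF hij) (gtn_eqF (ltnW hij : (i < j.+1)%N)).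
  by rewrite andFb mulr0 mulr0 addr0.
rewrite unitfE prodf_seq_neq0; apply/allP => i _ /=.
rewrite !mxE /= /bump /= add1n eqxx mulr1.
by rewrite (_ : ((i.+1:nat) == i) = false) ?andFb ?mulr0 ?add0r // gtn_eqF.
Qed.

End Rank.
Section Props.
Variable k : fieldType.
Variables r d : nat.
Local Notation a := d.+2.
Local Notation M := (@Mrep k r d).
Local Notation W1 := (W1 k r d).
Local Notation W2 := (W2 k r d).

Lemma W1P_entry (P : 'M[k]_(a, a)) (i : 'I_r) (c : 'I_a) l :
  (i:nat) = c -> (i <= d)%N -> (W1 *m P) i l = P c l.
Proof.
move=> hic hid; rewrite !mxE; under eq_bigr do rewrite mxE hid andbT hic.
exact: sum_delta.
Qed.

Lemma W2P_entry (P : 'M[k]_(a, a)) (i : 'I_r) (c : 'I_a) l :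
  (c:nat) = i.+1 -> (W2 *m P) i l = P c l.
Proof.
move=> hic; rewrite !mxE; under eq_bigr do rewrite mxE -hic.
exact: sum_delta.
Qed.

Lemma comb_entry (s t : k) i l :
  (s *: W1 + t *: W2) i l = s * (((l:nat) == i) && (i <= d)%N)%:R + t * ((l:nat) == i.+1)%:R.
Proof. by rewrite !mxE. Qed.

Lemma W1_ker : psiN M W1 = 0.
Proof. by apply/kerM; exists 1, 0; rewrite scale1r scale0r addr0. Qed.

Lemma W2_ker : psiN M W2 = 0.
Proof. by apply/kerM; exists 0, 1; rewrite scale1r scale0r add0r. Qed.

Lemma Mproj (hd : (d.+1 <= r)%N) : rep_proj d M.
Proof.
move=> alpha hfree; apply: psi_injectiveE => W; rewrite psiN_pullback.
case/kerM => s [t h].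
case: (boolP ((s != 0) || (t != 0))) => hst.
  by have := rank_bound hd hst h; rewrite ltnn.
move: hst; rewrite negb_or !negbK => /andP [/eqP hs /eqP ht].
move: h; rewrite hs ht !scale0r addr0 => h.
apply: trmx_inj; rewrite trmx0; apply/eqP.
by rewrite -(mulmx_free_eq0 _ hfree) -[alpha]trmxK -trmx_mul h trmx0.
Qed.

Lemma psiM_scale (s : k) W : psiN M (s *: W) = s *: psiN M W.
Proof. by rewrite !psiM linearZ -scalemxAl. Qed.

Lemma Mbrick (hd : (1 <= d)%N) (hr : (d.+1 <= r)%N) : brick M.
Proof.
split => // P Q hPQ.
have h1 := psiN_iso W1 hPQ; rewrite W1_ker mul0mx in h1.
have h2 := psiN_iso W2 hPQ; rewrite W2_ker mul0mx in h2.
move/esym/kerM: h1 => [s [t h1]].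
move/esym/kerM: h2 => [s' [t' h2]].
have r0 : (0 < r)%N by apply: leq_trans hr.
have r1 : (1 < r)%N by apply: leq_trans hr.
pose i0 : 'I_r := Ordinal r0.
pose i1 : 'I_r := Ordinal r1.
pose c0 : 'I_a := inord 0.
pose c1 : 'I_a := inord 1.
pose c2 : 'I_a := inord 2.
have e1 : forall l, P c1 l = s * ((l:nat) == 1)%:R + t * ((l:nat) == 2)%:R.
  move=> l; rewrite -(W1P_entry P (i := i1)) ?h1 ?comb_entry /= ?hd ?andbT //.
  by rewrite inordK.
have e2 : forall l, P c1 l = s' * ((l:nat) == 0)%:R + t' * ((l:nat) == 1)%:R.
  move=> l; rewrite -(W2P_entry P (i := i0)) ?h2 ?comb_entry /= ?andbT //.
  by rewrite inordK.
have hs' : s' = 0.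
  by have := e2 c0; rewrite e1 /= inordK //= !mulr0 !mulr1 !addr0.
have ht' : t' = s.
  by have := e2 c1; rewrite e1 /= inordK //= !mulr0 !mulr1 !addr0 !add0r.
have ht : t = 0.
  by have := e2 c2; rewrite e1 /= inordK //= !mulr0 !mulr1 !addr0 !add0r.
have hP : P = s%:M.
  apply/matrixP => c l; rewrite mxE.
  case hc: (nat_of_ord c) => [|c'].
    have hc0 : (i0 : nat) = c by rewrite hc.
    rewrite -(W1P_entry P l hc0) // h1 comb_entry ht mul0r addr0 /i0 /= andbT.
    by rewrite mulr_natr -val_eqE /= hc eq_sym.
  have hc' : (c' < r)%N by apply: leq_trans hr; rewrite -ltnS -hc.
  have hcc : (c:nat) = (Ordinal hc').+1 by rewrite hc.
  rewrite -(W2P_entry P l hcc) // h2 comb_entry hs' ht' mul0r add0r /=.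
  by rewrite mulr_natr -val_eqE /= hc eq_sym.
exists s; split => //.
have hx : forall x : 'rV_(r * a), x *m Bmx k r d *m Q = x *m Bmx k r d *m s%:M.
  move=> x; have := psiN_iso (vec_mx x) hPQ.
  by rewrite hP mul_mx_scalar psiM_scale !psiM vec_mxK mul_mx_scalar.
have hB : Bmx k r d *m Q = Bmx k r d *m s%:M.
  apply/row_matrixP => i; rewrite (row_mul i (Bmx k r d) Q) (row_mul i (Bmx k r d)) rowE; exact: hx.
apply/eqP; rewrite -subr_eq0; apply/eqP; apply: (@Binj k r d).
by rewrite mulmxBr hB subrr.
Qed.

End Props.
Section NonHom.
Variable k : fieldType.
Variables r d : nat.
Local Notation a := d.+2.
Local Notation M := (@Mrep k r d).

Definition alphaS : 'M[k]_(d.+1, r) := \matrix_(j < d.+1, i < r) (((j:nat) == i)%:R).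
Definition betaA : 'M[k]_(d.+1, r) := \matrix_(j < d.+1, i < r) (((i:nat) == j.+1)%:R).
Definition W0 : 'M[k]_(d.+1, a) := \matrix_(j < d.+1, l < a) (((l:nat) == j)%:R).
Definition W0' : 'M[k]_(d.+1, a) := \matrix_(j < d.+1, l < a) (((l:nat) == j.+1)%:R).

Lemma alphaT_entry p (X : 'M[k]_(d.+1, p)) i l :
  (alphaS^T *m X) i l = \sum_(j < d.+1) ((j:nat) == i)%:R * X j l.
Proof. by rewrite !mxE; apply: eq_bigr => j _; rewrite !mxE. Qed.

Lemma alphaT_W0 : alphaS^T *m W0 = W1 k r d.
Proof.
apply/matrixP => i l; rewrite alphaT_entry [RHS]mxE.
case: (ltnP i d.+1) => hi.
  rewrite (sum_delta (Ordinal hi) (fun j => W0 j l)) mxE /=.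
  by rewrite -ltnS hi andbT.
rewrite sum_delta0 //; rewrite (_ : (i <= d)%N = false) ?andbF //.
by apply/negbTE; rewrite -ltnNge.
Qed.

Lemma alphaT_W0' : alphaS^T *m W0' = W2 k r d.
Proof.
apply/matrixP => i l; rewrite alphaT_entry [RHS]mxE.
case: (ltnP i d.+1) => hi.
  by rewrite (sum_delta (Ordinal hi) (fun j => W0' j l)) mxE /=.
rewrite sum_delta0 //; rewrite (_ : ((l:nat) == i.+1) = false) //.
by apply/negbTE; rewrite neq_ltn; apply/orP; left; apply: leq_trans (ltn_ord l) _.
Qed.

Lemma alphaS_free : (d.+1 <= r)%N -> row_free alphaS.
Proof.
move=> hr; apply/row_freeP; exists alphaS^T.
apply/matrixP => j j'; rewrite !mxE.
have hj : (j < r)%N by apply: leq_trans hr.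
rewrite (bigD1 (Ordinal hj)) //= big1 ?addr0.
  by rewrite !mxE /= eqxx mul1r eq_sym -val_eqE.
move=> i hi; rewrite !mxE (_ : ((j:nat) == i) = false) ?mul0r //.
by apply/negbTE; apply: contra hi => /eqP h; apply/eqP/val_inj.
Qed.

Lemma betaA_free : (d.+2 <= r)%N -> row_free betaA.
Proof.
move=> hr; apply/row_freeP; exists betaA^T.
apply/matrixP => j j'; rewrite !mxE.
have hj : (j.+1 < r)%N by apply: leq_trans hr; rewrite ltnS.
rewrite (bigD1 (Ordinal hj)) //= big1 ?addr0.
  by rewrite !mxE /= eqxx mul1r eqSS -val_eqE.
move=> i hi; rewrite !mxE (_ : ((i:nat) == j.+1) = false) ?mul0r //.
by apply/negbTE; apply: contra hi => /eqP h; apply/eqP/val_inj.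
Qed.

Lemma W0P_entry (P : 'M[k]_(a, a)) (j : 'I_d.+1) (c : 'I_a) l :
  (c:nat) = j -> (W0 *m P) j l = P c l.
Proof.
move=> hc; rewrite !mxE; under eq_bigr do rewrite mxE -hc.
exact: sum_delta.
Qed.

Lemma W0'P_entry (P : 'M[k]_(a, a)) (j : 'I_d.+1) (c : 'I_a) l :
  (c:nat) = j.+1 -> (W0' *m P) j l = P c l.
Proof.
move=> hc; rewrite !mxE; under eq_bigr do rewrite mxE -hc.
exact: sum_delta.
Qed.

Lemma unit_cancel (X : 'M[k]_(d.+1, a)) (P : 'M[k]_a) :
  P \in unitmx -> X *m P = 0 -> X = 0.
Proof. by move=> hu h; rewrite -(mulmxK hu X) h mul0mx. Qed.

Lemma free_cancel (X : 'M[k]_(d.+1, a)) (beta : 'M[k]_(d.+1, r)) :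
  row_free beta -> beta^T *m X = 0 -> X = 0.
Proof.
move=> hf h; apply: trmx_inj; rewrite trmx0; apply/eqP.
by rewrite -(mulmx_free_eq0 _ hf) -[beta]trmxK -trmx_mul h trmx0.
Qed.

Lemma nonhomA : (1 <= d)%N -> (d.+2 <= r)%N -> ~ homogeneous d.+1 M.
Proof.
move=> hd hr hom.
have hr' : (d.+1 <= r)%N by apply: ltnW.
have [P [Q [hP [hQ hPQ]]]] := hom _ _ (alphaS_free hr') (betaA_free hr).
have := psiN_iso W0 hPQ.
rewrite psiN_pullback alphaT_W0 W1_ker mul0mx psiN_pullback => /esym /kerM [s [t h]].
have r0 : (0 < r)%N by apply: leq_trans hr.
have e : forall l : 'I_a, s * (((l:nat) == 0) && (0 <= d)%N)%:R + t * ((l:nat) == 1)%:R = 0.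
  move=> l; have := congr1 (fun X : 'M[k]_(r, a) => X (Ordinal r0) l) h.
  rewrite comb_entry /= => <-; rewrite !mxE big1 // => j _; rewrite !mxE /=.
  by rewrite mul0r.
have hs : s = 0.
  by have := e (inord 0); rewrite inordK //= mulr1 mulr0 addr0.
have ht : t = 0.
  by have := e (inord 1); rewrite inordK //= mulr1 mulr0 add0r.
move: h; rewrite hs ht !scale0r addr0 => /(free_cancel (betaA_free hr)).
move/(unit_cancel hP) => h0.
have := congr1 (fun X : 'M[k]_(d.+1, a) => X ord0 ord0) h0; rewrite !mxE /=.
by move/eqP; rewrite oner_eq0.
Qed.

End NonHom.
Section NonHomB.
Variable k : fieldType.
Variables r d : nat.
Hypothesis hd : (2 <= d)%N.
Hypothesis hr : r = d.+1.
Local Notation a := d.+2.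
Local Notation M := (@Mrep k r d).

Definition betaB : 'M[k]_(d.+1, r) := tperm_mx (0 : 'I_d.+1) (inord 1) *m alphaS k r d.

Lemma betaB_free : row_free betaB.
Proof.
rewrite /row_free /betaB mxrankMfree ?mxrank_unit ?unitmx_perm //.
by apply: alphaS_free; rewrite hr.
Qed.

Lemma betaB_entry (X : 'M[k]_(d.+1, a)) (i : 'I_r) (j : 'I_d.+1) l :
  (i:nat) = j -> (betaB^T *m X) i l = X (tperm 0 (inord 1) j) l.
Proof.
move=> hij; rewrite /betaB trmx_mul tr_tperm_mx -mulmxA -xrowE alphaT_entry hij.
by rewrite (sum_delta j (fun j => xrow 0 (inord 1) X j l)) mxE.
Qed.

Lemma nonhomB : ~ homogeneous d.+1 M.
Proof.
move=> hom.
have hr' : (d.+1 <= r)%N by rewrite hr.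
have [P [Q [hP [hQ hPQ]]]] := hom _ _ (@alphaS_free k r d hr') betaB_free.
have := psiN_iso (W0' k d) hPQ.
rewrite psiN_pullback alphaT_W0' W2_ker mul0mx psiN_pullback => /esym /kerM [s [t h]].
have := psiN_iso (W0 k d) hPQ.
rewrite psiN_pullback alphaT_W0 W1_ker mul0mx psiN_pullback => /esym /kerM [s' [t' h']].
have r0 : (0 < r)%N by rewrite hr.
have r2 : (2 < r)%N by rewrite hr ltnS.
have d1 : (1 < d.+1)%N by apply: leq_trans hd _.
have d2 : (2 < d.+1)%N by rewrite ltnS.
have e : forall l : 'I_a, s * (((l:nat) == 0) && (0 <= d)%N)%:R + t * ((l:nat) == 1)%:R
        = s' * (((l:nat) == 2) && (2 <= d)%N)%:R + t' * ((l:nat) == 3)%:R.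
  move=> l.
  have := congr1 (fun X : 'M[k]_(r, a) => X (Ordinal r0) l) h.
  rewrite comb_entry /= => <-.
  have := congr1 (fun X : 'M[k]_(r, a) => X (Ordinal r2) l) h'.
  rewrite comb_entry /= => <-.
  rewrite (betaB_entry _ l (j := 0)) // (betaB_entry _ l (j := inord 2)) /=; last first.
    by rewrite inordK.
  rewrite tpermL tpermD; last 2 first.
  - by rewrite -val_eqE /= inordK.
  - by rewrite -val_eqE /= !inordK.
  rewrite (W0'P_entry P l (c := inord 2)) /=; last by rewrite !inordK.
  by rewrite (W0P_entry P l (c := inord 2)) //= !inordK.
have hs : s = 0.
  by have := e (inord 0); rewrite inordK //= !mulr1 !mulr0 !addr0.
have ht : t = 0.
  by have := e (inord 1); rewrite inordK //= !mulr1 !mulr0 !addr0 !add0r.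
move: h; rewrite hs ht !scale0r addr0 => /(free_cancel betaB_free).
move/(unit_cancel hP) => h0.
have := congr1 (fun X : 'M[k]_(d.+1, a) => X ord0 (inord 1)) h0; rewrite !mxE /= inordK //.
by move/eqP; rewrite oner_eq0.
Qed.

End NonHomB.

Theorem proposition5p2p1 (k : closedFieldType) (r d : nat) :
  (3 <= r)%N -> (1 <= d)%N -> (d <= r - 1)%N ->
  exists (a b : nat) (M : krep k r a b),
    brick M /\ rep_proj d M /\ ~ homogeneous (d.+1) M.
Proof.
move=> h3 h1 hdr.
have hr : (d.+1 <= r)%N by lia.
exists d.+2, (bdim k r d), (@Mrep k r d).
split; first exact: Mbrick.
split; first exact: Mproj.
case: (ltnP d.+1 r) => h.
  exact: nonhomA.
have e : r = d.+1 by lia.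
apply: (@nonhomB k r d _ e); lia.
Qed.
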